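(* The Tuza constants satisfy $c_7 \le 0.1916$, $c_8 \le 0.1772$, and $c_k \le 0.1667$ for every integer $k$ with $9 \le k \le 17$.
   Context: A hypergraph $H=(V,E)$ consists of a finite vertex set $V$ and a finite collection $E$ of subsets of $V$ (edges). $H$ is $k$-uniform if every edge has exactly $k$ vertices. A transversal of $H$ is a set $T\subseteq V$ meeting every edge; $\tau(H)$ denotes the minimum size of a transversal. For $k\ge 1$, the Tuza constant is $c_k=\sup_{H} \tau(H)/(m+n)$, where the supremum ranges over all $k$-uniform hypergraphs $H$, with $n=|V|$ and $m=|E|$. *)

(* Defs.v *)
From HB Require Import structures.
From mathcomp Require Import all_boot all_order all_algebra.
From mathcomp Require Import all_classical all_reals.
Set Implicit Arguments. Unset Strict Implicit. Unset Printing Implicit Defensive.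
Import Order.TTheory GRing.Theory Num.Theory.

(* A hypergraph: vertex set = a finite type V, edges = a finite collection
   (sequence, repetitions allowed) of subsets of V. *)

Definition uniform (V : finType) (k : nat) (E : seq {set V}) : Prop :=
  forall e, e \in E -> #|e| = k.

Definition is_transversal (V : finType) (E : seq {set V}) (T : {set V}) : bool :=
  all (fun e : {set V} => ~~ [disjoint T & e]) E.

(* tau(H): minimum size of a transversal (the default #|V| is only reached
   when no transversal exists, which cannot happen if all edges are nonempty;
   moreover setT is then a transversal, so the min is the true minimum). *)
Definition tau (V : finType) (E : seq {set V}) : nat :=
  \big[minn/#|V|]_(T : {set V} | is_transversal E T) #|T|.

Local Open Scope ring_scope.

Definition tuza_constant (R : realType) (k : nat) : R :=
  sup [set r : R | exists (V : finType) (E : seq {set V}),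
        uniform k E /\ r = (tau E)%:R / (size E + #|V|)%:R].

(* Main.v *)
Require Import Defs.
From HB Require Import structures.
From mathcomp Require Import all_boot all_order all_algebra.
From mathcomp Require Import all_classical all_reals.
Import Order.TTheory GRing.Theory Num.Theory.
Local Open Scope ring_scope.
From mathcomp Require Import zify lra.
Local Close Scope ring_scope.
Import finset fintype.

Lemma bigmin_le (I : eqType) (r : seq I) (P : pred I) (F : I -> nat) x i0 :
  i0 \in r -> P i0 -> \big[minn/x]_(i <- r | P i) F i <= F i0.
Proof.
elim: r => //= i r IH; rewrite in_cons big_cons => /orP [/eqP <- -> | Hr HP].
  exact: geq_minl.
case: (P i); last exact: IH.
by rewrite geq_min IH ?orbT.
Qed.

Lemma tau_le (V : finType) (E : seq {set V}) (T : {set V}) : Defs.is_transversal E T -> tau E <= #|T|.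
Proof. by move=> HT; rewrite /tau; apply: bigmin_le => //; rewrite mem_index_enum. Qed.

Definition deg (V : finType) (E : seq {set V}) (v : V) : nat :=
  count (fun e : {set V} => v \in e) E.
Arguments deg {V}.

Lemma count_split (T : Type) (p q : pred T) s :
  count p s = count (fun x => q x && p x) s + count (fun x => ~~ q x && p x) s.
Proof. elim: s => //= x s ->; case: (p x); case: (q x) => /=; lia. Qed.

Arguments count_split {T}.

Lemma concave_step (al : nat -> nat)
  (Hmono : forall j, al j <= al j.+1)
  (Hconc : forall j D, 0 < j <= D -> al j.-1 + al D <= al j + al D.-1) :
  forall D m d, m <= d <= D -> al (d - m) + m * (al D - al D.-1) <= al d.
Proof.
move=> D; elim=> [|m IH] d /andP [Hmd HdD]; first by rewrite subn0 mul0n addn0.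
have := IH d; rewrite (ltnW Hmd) HdD => /(_ isT) H1.
have H2 := Hconc (d - m) D.
have Hj : 0 < d - m <= D by apply/andP; split; lia.
have {H2} H2 := H2 Hj.
have Hp : (d - m).-1 = d - m.+1 by lia.
rewrite Hp in H2.
have HDm : al D.-1 <= al D by case: (D) => [|D'] //=; exact: Hmono.
rewrite mulSn; lia.
Qed.

Arguments concave_step {al}.

Lemma nbr_count (V : finType) (v : V) (U : {set V}) (E : seq {set V}) k0 :
  (forall e, e \in E -> e \subset U /\ k0 <= #|e|) ->
  count (fun e : {set V} => v \in e) E * k0.-1 <=
  \sum_(u in U :\ v) count (fun e : {set V} => (v \in e) && (u \in e)) E.
Proof.
elim: E => [|e E IH] H /=; first by rewrite mul0n.
rewrite (eq_bigr (fun u => ((v \in e) && (u \in e) : nat) +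
   count (fun e : {set V} => (v \in e) && (u \in e)) E)) // big_split /= mulnDl.
apply: leq_add; last by apply: IH => f fE; apply: H; rewrite in_cons fE orbT.
have [eU ke] := H e (mem_head _ _).
case Hve: (v \in e) => /=; last by rewrite mul0n.
have -> : \sum_(u in U :\ v) ((u \in e) : nat) = #|(U :\ v) :&: e|.
  rewrite -sum1_card big_mkcond [in RHS]big_mkcond; apply: eq_bigr => u _.
  by rewrite finset.in_setI; case: (u \in U :\ v); case: (u \in e).
rewrite finset.setIC finset.setIDA (finset.setIidPl eU).
have := finset.cardsD1 v e; rewrite Hve; lia.
Qed.

Lemma greedy (V : finType) (k0 N w : nat) (al : nat -> nat)
  (Hmono : forall j, al j <= al j.+1)
  (Hconc : forall j D, 0 < j <= D -> al j.-1 + al D <= al j + al D.-1)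
  (HS : forall D, 0 < D -> N <= al D + D * w + D * k0.-1 * (al D - al D.-1))
  (Hk0 : 0 < k0) :
  forall n (U : {set V}) (E : seq {set V}), #|U| <= n ->
  (forall e, e \in E -> e \subset U /\ k0 <= #|e|) ->
  exists T : {set V}, Defs.is_transversal E T /\
    N * #|T| <= \sum_(u in U) al (deg E u) + size E * w.
Proof.
elim=> [|n IH] U E HU HE.
  case: E HE => [|e0 E0] HE; first by exists finset.set0; split => //; rewrite finset.cards0 muln0.
  have [eU ke] := HE e0 (mem_head _ _).
  have : 0 < #|e0| by lia.
  move/card_gt0P => [x xe]; have := subsetP eU x xe.
  by move: HU; rewrite leqn0 => /eqP/finset.cards0_eq ->; rewrite finset.in_set0.
case: E HE => [|e0 E0] HE; first by exists finset.set0; split => //; rewrite finset.cards0 muln0.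
set E := e0 :: E0.
have [eU ke] := HE e0 (mem_head _ _).
have : 0 < #|e0| by lia.
move/card_gt0P => [x xe]; have xU := subsetP eU x xe.
case: (arg_maxnP (deg E) xU) => v vU0 vmax.
have vU : v \in U := vU0.
set D := deg E v.
have D1 : 0 < D.
  have : 0 < deg E x by rewrite /deg /= xe.
  have := vmax x xU; rewrite -/D; lia.
set E' := seq.filter (fun e : {set V} => v \notin e) E.
have HE' : forall e, e \in E' -> e \subset U :\ v /\ k0 <= #|e|.
  move=> e; rewrite mem_filter => /andP [ve eE]; have [eU' ke'] := HE e eE.
  by rewrite finset.subsetD1 eU' ve.
have HU' : #|U :\ v| <= n by have := finset.cardsD1 v U; rewrite vU; lia.
have [T' [HT' HN]] := IH _ _ HU' HE'.
exists (v |: T'); split.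
  apply/allP => e eE; case Hve: (v \in e).
    apply/negP => Hd; have := disjointFr Hd (finset.setU11 v T'); by rewrite Hve.
  have eE' : e \in E' by rewrite mem_filter Hve.
  have := allP HT' e eE'; apply: contra; apply: disjointWl; exact: finset.subsetUr.
have Hcard : #|v |: T'| <= #|T'|.+1 by rewrite finset.cardsU1; case: (v \notin T').
rewrite (finset.big_setD1 v vU).
set beta := al D - al D.-1.
set M := \sum_(u in U :\ v) count (fun e : {set V} => (v \in e) && (u \in e)) E.
have key : \sum_(u in U :\ v) al (deg E' u) + beta * M <= \sum_(u in U :\ v) al (deg E u).
  rewrite /M big_distrr -big_split; apply: leq_sum => u; rewrite finset.in_setD1 => /andP [_ uU].
  have Hsplit := count_split (fun e : {set V} => u \in e) (fun e : {set V} => v \in e) E.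
  have HdE' : deg E' u = count (fun e : {set V} => ~~ (v \in e) && (u \in e)) E.
    rewrite /deg /E' count_filter; apply: eq_count => e /=; by rewrite andbC.
  have Hle : deg E u <= D := vmax u uU.
  set m := count (fun e : {set V} => (v \in e) && (u \in e)) E.
  have Hdeg : deg E u = deg E' u + m by rewrite HdE' /deg Hsplit addnC.
  have := concave_step Hmono Hconc D m (deg E u).
  rewrite Hdeg addnK => H.
  change (al (deg E' u) + beta * m <= al (deg E' u + m)); rewrite mulnC; apply: H.
  rewrite -Hdeg Hle andbT Hdeg; exact: leq_addl.
have nb : D * k0.-1 <= M by apply: nbr_count.
have sz : size E = size E' + D.
  by rewrite size_filter /D /deg -(count_predC (fun e : {set V} => v \in e) E) addnC.
have HSD := HS D D1; rewrite -/beta in HSD.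
have Hb : beta * (D * k0.-1) <= beta * M by rewrite leq_mul2l nb orbT.
have e1 : D * k0.-1 * beta = beta * (D * k0.-1) by rewrite mulnC.
rewrite e1 in HSD.
have Hc : N * #|v |: T'| <= N * #|T'| + N by rewrite addnC -mulnS leq_mul2l Hcard orbT.
rewrite sz mulnDl.
change (N * #|v |: T'| <= al D + \sum_(u in U :\ v) al (deg E u) + (size E' * w + D * w)).
lia.
Qed.

Local Open Scope ring_scope.

Lemma tuza_bound (R : realType) (k k0 N C w : nat) (al : nat -> nat)
  (Hmono : forall j, (al j <= al j.+1)%N)
  (Hconc : forall j D, (0 < j <= D)%N -> (al j.-1 + al D <= al j + al D.-1)%N)
  (HS : forall D, (0 < D)%N -> (N <= al D + D * w + D * k0.-1 * (al D - al D.-1))%N)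
  (Hk0 : (0 < k0)%N) (Hk : (k0 <= k)%N) (HN : (0 < N)%N)
  (HC : forall d, (al d <= C)%N) (Hw : (w <= C)%N) :
  tuza_constant R k <= C%:R / N%:R.
Proof.
rewrite /tuza_constant; apply: ge_sup.
  by eexists; exists void, [::]; split.
move=> r [V [E [HU ->]]].
have HE : forall e, e \in E -> e \subset [set: V] /\ (k0 <= #|e|)%N.
  by move=> e eE; split; [exact: finset.subsetT | rewrite HU].
have [T [HT HNT]] := @greedy V k0 N w al Hmono Hconc HS Hk0 _ _ _ (leqnn #|[set: V]|) HE.
have Htau := @tau_le V E T HT.
have Hsum : (\sum_(u in [set: V]) al (deg E u) <= \sum_(u in [set: V]) C)%N.
  by apply: leq_sum => u _.
rewrite sum_nat_const finset.cardsT in Hsum.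
have Hmain : (tau E * N <= C * (size E + #|V|))%N.
  rewrite mulnC; apply: (leq_trans (leq_mul (leqnn N) Htau)).
  apply: (leq_trans HNT); rewrite mulnDr.
  have : (size E * w <= size E * C)%N by rewrite leq_mul2l Hw orbT.
  rewrite [(C * #|V|)%N]mulnC [(C * size E)%N]mulnC; lia.
case Hs: (size E + #|V|)%N => [|s].
  by rewrite invr0 mulr0 divr_ge0 ?ler0n.
rewrite ler_pdivrMr ?ltr0n // mulrAC ler_pdivlMr ?ltr0n //.
by rewrite -!natrM ler_nat -Hs.
Qed.

Definition al7 (d : nat) : nat := nth 19 [:: 0; 12; 16; 18; 19]%N d.
Definition al8 (d : nat) : nat := nth 33 [:: 0; 21; 29; 32; 33]%N d.
Definition al9 (d : nat) : nat := nth 32 [:: 0; 19; 26; 29; 31; 32]%N d.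

Ltac small6 d := do 7 (try (case: d => [|d]; first by [])).

Lemma al_tail (c : nat) (s : seq nat) d : (size s <= d)%N -> nth c s d = c.
Proof. exact: nth_default. Qed.

Lemma params_ok (al : nat -> nat) (s : seq nat) (c N w k0 C : nat)
  (Hal : forall d, al d = nth c s d) (Hsz : (size s <= 6)%N)
  (Hm : forall j, (j <= 6)%N -> (al j <= al j.+1)%N)
  (Hcn : forall j D, (0 < j <= D)%N -> (D <= 7)%N -> (al j.-1 + al D <= al j + al D.-1)%N)
  (Hs : forall D, (0 < D)%N -> (D <= 7)%N -> (N <= al D + D * w + D * k0.-1 * (al D - al D.-1))%N)
  (Hend : (N <= c + 7 * w)%N) :
  [/\ forall j, (al j <= al j.+1)%N,
      forall j D, (0 < j <= D)%N -> (al j.-1 + al D <= al j + al D.-1)%N &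
      forall D, (0 < D)%N -> (N <= al D + D * w + D * k0.-1 * (al D - al D.-1))%N].
Proof.
have Hbig : forall d, (6 <= d)%N -> al d = c by move=> d Hd; rewrite Hal al_tail //; lia.
have Hmono : forall j, (al j <= al j.+1)%N.
  move=> j; case: (leqP j 6) => Hj; first exact: Hm.
  by rewrite !Hbig //; lia.
split => //.
  move=> j D HjD; case: (leqP D 7) => HD; first exact: Hcn.
  rewrite (Hbig D) ?(Hbig D.-1); try lia.
  have := Hmono j.-1; rewrite prednK; lia.
move=> D HD; case: (leqP D 7) => HD7; first exact: Hs.
rewrite (Hbig D) ?(Hbig D.-1); try lia.
have : (7 * w <= D * w)%N by rewrite leq_mul2r; apply/orP; right; lia.
lia.
Qed.

Lemma all_iota_le (P : pred nat) n : all P (iota 0 n.+1) -> forall j, (j <= n)%N -> P j.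
Proof. move/allP => H j Hj; apply: H; rewrite mem_iota; lia. Qed.

Arguments all_iota_le {P n}.

Lemma inst (R : realType) (k k0 N C w c : nat) (s : seq nat) :
  let al := fun d => nth c s d in
  (size s <= 6)%N -> (0 < k0)%N -> (k0 <= k)%N -> (0 < N)%N -> (w <= C)%N -> (c <= C)%N ->
  (N <= c + 7 * w)%N ->
  all (fun j => al j <= al j.+1)%N (iota 0 7) ->
  all (fun D => all (fun j => (0 < j <= D) ==> (al j.-1 + al D <= al j + al D.-1))%N
                        (iota 0 8)) (iota 0 8) ->
  all (fun D => (0 < D) ==> (N <= al D + D * w + D * k0.-1 * (al D - al D.-1)))%N (iota 0 8) ->
  all (fun d => al d <= C)%N (iota 0 7) ->
  tuza_constant R k <= C%:R / N%:R.
Proof.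
move=> al Hsz Hk0 Hk HN Hw HcC Hend H1 H2 H3 H4.
have Hcn : forall j D, (0 < j <= D)%N -> (D <= 7)%N -> (al j.-1 + al D <= al j + al D.-1)%N.
  move=> j D HjD HD; have Hin := all_iota_le H2 D HD.
  have := all_iota_le Hin j (leq_trans (proj2 (andP HjD)) HD) => /implyP; exact.
have [Hmono Hconc HS] := @params_ok al s c N w k0 C (fun d => erefl) Hsz
  (all_iota_le H1) Hcn
  (fun D HD HD7 => implyP (all_iota_le H3 D HD7) HD) Hend.
apply: (@tuza_bound R k k0 N C w al Hmono Hconc HS Hk0 Hk HN _ Hw).
move=> d; case: (leqP d 6) => Hd; first exact: (all_iota_le H4).
by rewrite /al al_tail //; lia.
Qed.

Theorem theorem1 (R : realType) :
  tuza_constant R 7 <= 1916%:R / 10000%:R /\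
  tuza_constant R 8 <= 1772%:R / 10000%:R /\
  (forall k : nat, (9 <= k <= 17)%N -> tuza_constant R k <= 1667%:R / 10000%:R).
Proof.
split.
  apply: le_trans (@inst R 7 7 100 19 19 19 [:: 0; 12; 16; 18; 19]%N _ _ _ _ _ _ _ _ _ _ _) _;
    try by []; lra.
split.
  apply: le_trans (@inst R 8 8 200 35 35 33 [:: 0; 21; 29; 32; 33]%N _ _ _ _ _ _ _ _ _ _ _) _;
    try by []; lra.
move=> k /andP [Hk1 Hk2].
apply: le_trans (@inst R k 9 200 33 33 32 [:: 0; 19; 26; 29; 31; 32]%N _ _ _ _ _ _ _ _ _ _ _) _;
  try by []; lra.
Qed.
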